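(* Let $m\ge1$ and let $u$ be an $m$-labeled binary tree with $|u|=p$ edges. The generating function $\mathbf C^{\mathcal B}_{m,p}(z)=\sum_{n\ge0} c_n z^n$, where $c_n$ is the number of $m$-labeled binary trees with $n$ edges that contain $u$ as a subtree, is $$\mathbf C^{\mathcal B}_{m,p}(z)=\frac{1}{2mz^2}\left(\sqrt{1-4mz+4mz^{p+2}}-\sqrt{1-4mz}\right).$$
   Context: An $m$-labeled binary tree is a non-empty finite rooted tree whose nodes carry labels from $\{1,\dots,m\}$ and in which every node has an optional left child and an optional right child (a node with only a left child is distinct from one with only a right child). Its size is its number of edges. A tree $t$ contains $u$ as a subtree if for some node $v$ of $t$, the subtree of $t$ rooted at $v$ (consisting of $v$ and all its descendants) equals $u$. *)

(* Defs.v *)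
From Stdlib Require Import Reals List.
From Coquelicot Require Import Coquelicot.

Inductive btree : Type :=
  | Node : nat -> option btree -> option btree -> btree.

Fixpoint nnodes (t : btree) : nat :=
  match t with
  | Node _ l r =>
      1 + match l with Some l' => nnodes l' | None => 0 end
        + match r with Some r' => nnodes r' | None => 0 end
  end.

Definition edges (t : btree) : nat := nnodes t - 1.

Fixpoint labeled (m : nat) (t : btree) : Prop :=
  match t with
  | Node a l r =>
      (1 <= a <= m)%nat
      /\ match l with Some l' => labeled m l' | None => True end
      /\ match r with Some r' => labeled m r' | None => True end
  end.

Inductive contains : btree -> btree -> Prop :=
  | contains_here u : contains u u
  | contains_left a l r u : contains l u -> contains (Node a (Some l) r) u
  | contains_right a l r u : contains r u -> contains (Node a l (Some r)) u.

Definition is_count (P : btree -> Prop) (k : nat) : Prop :=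
  exists s : list btree, NoDup s /\ (forall t, In t s <-> P t) /\ length s = k.

(* Main.v *)
Require Import Defs.
From Stdlib Require Import Reals List.
From Coquelicot Require Import Coquelicot.
Open Scope R_scope.
From Stdlib Require Import Lia Lra Arith ClassicalEpsilon Classical.
Import ListNotations.
Open Scope nat_scope.

Definition OP (P : btree -> Prop) (o : option btree) : Prop :=
  match o with None => True | Some t => P t end.

Fixpoint bt_ind (P : btree -> Prop) (H : forall a l r, OP P l -> OP P r -> P (Node a l r))
  (t : btree) : P t :=
  match t with Node a l r => H a l r
     (match l as o return OP P o with None => I | Some t' => bt_ind P H t' end)
     (match r as o return OP P o with None => I | Some t' => bt_ind P H t' end) end.

Definition onodes (o : option btree) : nat := match o with None => 0 | Some t => nnodes t end.

Lemma nnodes_eq a l r : nnodes (Node a l r) = S (onodes l + onodes r).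
Proof. destruct l, r; reflexivity. Qed.

Lemma nnodes_pos t : 1 <= nnodes t.
Proof. destruct t. rewrite nnodes_eq. lia. Qed.

Lemma labeled_eq m a l r : labeled m (Node a l r) <-> (1 <= a <= m /\ OP (labeled m) l /\ OP (labeled m) r).
Proof. destruct l, r; simpl; tauto. Qed.

Fixpoint ok (g : btree -> bool) (t : btree) : Prop :=
  match t with Node a l r => g (Node a l r) = true /\
    match l with Some l' => ok g l' | None => True end /\
    match r with Some r' => ok g r' | None => True end end.

Lemma ok_eq g a l r : ok g (Node a l r) <-> (g (Node a l r) = true /\ OP (ok g) l /\ OP (ok g) r).
Proof. destruct l, r; simpl; tauto. Qed.

Lemma contains_le t u : contains t u -> nnodes u <= nnodes t.
Proof. induction 1; rewrite ?nnodes_eq; simpl in *; lia. Qed.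

Lemma contains_inv a l r u : contains (Node a l r) u <->
  (Node a l r = u \/ (exists l', l = Some l' /\ contains l' u) \/ (exists r', r = Some r' /\ contains r' u)).
Proof.
  split.
  - intros H. inversion H; subst; eauto.
  - intros [H|[[l' [-> H]]|[r' [-> H]]]]; [subst; constructor| now constructor| now constructor].
Qed.

Definition gT (t : btree) : bool := true.
Definition gA (u : btree) (t : btree) : bool :=
  if excluded_middle_informative (t = u) then false else true.

Lemma ok_gT t : ok gT t.
Proof. induction t using bt_ind. apply ok_eq. unfold gT. destruct l, r; simpl in *; tauto. Qed.

Lemma ok_gA u t : ok (gA u) t <-> ~ contains t u.
Proof.
  induction t as [a l r Hl Hr] using bt_ind. rewrite ok_eq, contains_inv.
  unfold gA at 1. destruct (excluded_middle_informative (Node a l r = u)) as [E|E].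
  - split; [intros [H _]; discriminate| intros H; exfalso; apply H; left; exact E].
  - destruct l as [l|], r as [r|]; simpl in *; rewrite ?Hl, ?Hr;
    split; intros H; repeat split; try tauto;
    try (intros [?|[[? [? ?]]|[? [? ?]]]]; try congruence);
    try (intros HH; apply H; eauto 6).
    all: try (injection H0 as <-; tauto).
    all: try (injection H0 as <-; tauto).
Qed.

Definition ogen_of (G : nat -> list btree) (j : nat) : list (option btree) :=
  match j with 0 => [None] | S _ => map Some (G j) end.

Definition build (m : nat) (OG : nat -> list (option btree)) (k : nat) : list btree :=
  flat_map (fun a => flat_map (fun i => flat_map (fun l =>
     map (fun r => Node a l r) (OG (k - i))) (OG i)) (seq 0 (S k))) (seq 1 m).

Fixpoint gen (m : nat) (g : btree -> bool) (f k : nat) : list btree :=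
  match f with
  | 0 => []
  | S f' => match k with 0 => [] | S k' => filter g (build m (ogen_of (gen m g f')) k') end
  end.

Definition ogen m g f := ogen_of (gen m g f).

Lemma in_ogen_of (G : nat -> list btree) (P : btree -> Prop) K :
  (forall j t, 1 <= j <= K -> (In t (G j) <-> P t /\ nnodes t = j)) ->
  forall j o, j <= K -> (In o (ogen_of G j) <-> onodes o = j /\ OP P o).
Proof.
  intros HG j o Hj. destruct j as [|j]; simpl.
  - destruct o as [t|]; simpl; split.
    + intros [H|[]]; discriminate.
    + intros [H _]. pose proof (nnodes_pos t). lia.
    + auto.
    + auto.
  - rewrite in_map_iff. split.
    + intros [t [<- Ht]]. apply HG in Ht; [|lia]. simpl. tauto.
    + intros [Hn HP]. destruct o as [t|]; simpl in *; [|discriminate].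
      exists t. split; auto. apply HG; [lia|tauto].
Qed.

Lemma in_build m OG (Q : btree -> Prop) k :
  (forall j o, j <= k -> (In o (OG j) <-> onodes o = j /\ OP Q o)) ->
  forall t, In t (build m OG k) <-> exists a l r, t = Node a l r /\ 1 <= a <= m /\
      onodes l + onodes r = k /\ OP Q l /\ OP Q r.
Proof.
  intros HOG t. unfold build. rewrite in_flat_map. split.
  - intros [a [Ha H]]. apply in_seq in Ha. rewrite in_flat_map in H.
    destruct H as [i [Hi H]]. apply in_seq in Hi. rewrite in_flat_map in H.
    destruct H as [l [Hl H]]. apply in_map_iff in H. destruct H as [r [<- Hr]].
    apply HOG in Hl; [|lia]. apply HOG in Hr; [|lia].
    exists a, l, r. repeat split; try tauto; lia.
  - intros [a [l [r [-> [Ha [Hn [Hl Hr]]]]]]].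
    exists a. split; [apply in_seq; lia|]. apply in_flat_map. exists (onodes l).
    split; [apply in_seq; lia|]. apply in_flat_map. exists l. split.
    + apply HOG; [lia|tauto].
    + apply in_map_iff. exists r. split; auto. apply HOG; [lia|]. split; [lia|tauto].
Qed.

Lemma in_gen m g f : forall k t, k <= f ->
  (In t (gen m g f k) <-> labeled m t /\ nnodes t = k /\ ok g t).
Proof.
  induction f as [|f IH]; intros k t Hk.
  - simpl. assert (k = 0) by lia. subst. pose proof (nnodes_pos t). split; [tauto|lia].
  - destruct k as [|k].
    + simpl. pose proof (nnodes_pos t). split; [tauto|lia].
    + simpl gen. rewrite filter_In.
      rewrite (in_build m _ (fun t => labeled m t /\ ok g t) k).
      2:{ intros j o Hj. apply (in_ogen_of _ _ f); [|lia].
          intros j' t' Hj'. rewrite IH by lia. tauto. }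
      split.
      * intros [[a [l [r [-> [Ha [Hn [Hl Hr]]]]]]] Hg].
        rewrite labeled_eq, nnodes_eq, ok_eq.
        destruct l, r; simpl in *; intuition lia.
      * intros [Hl [Hn Ho]]. destruct t as [a l r].
        rewrite labeled_eq in Hl. rewrite nnodes_eq in Hn. rewrite ok_eq in Ho.
        split; [|tauto]. exists a, l, r. 
        destruct l, r; simpl in *; intuition lia.
Qed.

Lemma NoDup_flat_map_proj {A B} (f : A -> list B) (l : list A) (pr : B -> A) :
  NoDup l -> (forall a, In a l -> NoDup (f a)) ->
  (forall a b, In a l -> In b (f a) -> pr b = a) -> NoDup (flat_map f l).
Proof.
  induction l as [|a l IH]; intros Hl Hf Hp; simpl; [constructor|].
  inversion Hl; subst. apply NoDup_app.
  - apply Hf; simpl; auto.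
  - apply IH; auto; intros; [apply Hf|apply Hp]; simpl; auto.
  - intros b Hb Hb'. apply in_flat_map in Hb'. destruct Hb' as [a' [Ha' Hb']].
    assert (pr b = a) by (apply Hp; simpl; auto).
    assert (pr b = a') by (apply Hp; simpl; auto). congruence.
Qed.

Lemma NoDup_map_inj {A B} (f : A -> B) l : (forall x y, f x = f y -> x = y) -> NoDup l -> NoDup (map f l).
Proof.
  intros Hi. induction 1; simpl; constructor; auto.
  rewrite in_map_iff. intros [y [E Hy]]. apply Hi in E. subst. auto.
Qed.

Definition root (t : btree) := match t with Node a _ _ => a end.
Definition lft (t : btree) := match t with Node _ l _ => l end.

Lemma NoDup_build m OG k :
  (forall j, j <= k -> NoDup (OG j)) ->
  (forall j o, j <= k -> In o (OG j) -> onodes o = j) ->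
  NoDup (build m OG k).
Proof.
  intros HN HO. unfold build.
  apply NoDup_flat_map_proj with (pr := root); [apply seq_NoDup| |].
  2:{ intros a b _ Hb. apply in_flat_map in Hb. destruct Hb as [i [_ Hb]].
      apply in_flat_map in Hb. destruct Hb as [l [_ Hb]]. apply in_map_iff in Hb.
      destruct Hb as [r [<- _]]. reflexivity. }
  intros a _.
  apply NoDup_flat_map_proj with (pr := fun t => onodes (lft t)); [apply seq_NoDup| |].
  2:{ intros i b Hi Hb. apply in_seq in Hi. apply in_flat_map in Hb. destruct Hb as [l [Hl Hb]].
      apply in_map_iff in Hb. destruct Hb as [r [<- _]]. simpl. apply (HO i); auto; lia. }
  intros i Hi. apply in_seq in Hi.
  apply NoDup_flat_map_proj with (pr := lft); [apply HN; lia| |].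
  2:{ intros l b _ Hb. apply in_map_iff in Hb. destruct Hb as [r [<- _]]. reflexivity. }
  intros l _. apply NoDup_map_inj; [intros x y E; congruence| apply HN; lia].
Qed.

Lemma gen_sound m g f : forall k t, In t (gen m g f k) -> nnodes t = k.
Proof.
  induction f as [|f IH]; intros k t; simpl; [tauto|].
  destruct k as [|k]; [simpl; tauto|]. rewrite filter_In. intros [H _].
  unfold build in H. apply in_flat_map in H. destruct H as [a [_ H]].
  apply in_flat_map in H. destruct H as [i [Hi H]]. apply in_seq in Hi.
  apply in_flat_map in H. destruct H as [l [Hl H]]. apply in_map_iff in H. destruct H as [r [<- Hr]].
  rewrite nnodes_eq.
  assert (forall j o, In o (ogen_of (gen m g f) j) -> onodes o = j).
  { intros [|j] o; simpl; [intros [<-|[]]; reflexivity|]. rewrite in_map_iff.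
    intros [t' [<- Ht']]. simpl. apply IH; auto. }
  apply H in Hl. apply H in Hr. lia.
Qed.

Lemma NoDup_gen m g f : forall k, NoDup (gen m g f k).
Proof.
  induction f as [|f IH]; intros k; simpl; [constructor|].
  destruct k as [|k]; [constructor|]. apply NoDup_filter. apply NoDup_build.
  - intros [|j] _; simpl; [constructor; [simpl; tauto|constructor]|].
    apply NoDup_map_inj; [intros x y E; congruence| apply IH].
  - intros [|j] o _; simpl; [intros [<-|[]]; reflexivity|]. rewrite in_map_iff.
    intros [t' [<- Ht']]. simpl. eapply gen_sound; eauto.
Qed.

Lemma NoDup_ogen m g f j : NoDup (ogen m g f j).
Proof.
  unfold ogen. destruct j; simpl; [constructor; [simpl; tauto|constructor]|].
  apply NoDup_map_inj; [intros x y E; congruence| apply NoDup_gen].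
Qed.

Lemma in_ogen m g f j o : j <= f ->
  (In o (ogen m g f j) <-> onodes o = j /\ OP (fun t => labeled m t /\ ok g t) o).
Proof.
  intros Hj. apply (in_ogen_of _ _ f); [|lia]. intros j' t' Hj'. rewrite in_gen by lia. tauto.
Qed.

Lemma same_length {A} (l1 l2 : list A) : NoDup l1 -> NoDup l2 -> (forall x, In x l1 <-> In x l2) ->
  length l1 = length l2.
Proof.
  intros H1 H2 H. apply Nat.le_antisymm; apply NoDup_incl_length; auto; intros x; apply H.
Qed.

Lemma ogen_fuel m g f j : j <= f -> length (ogen m g f j) = length (ogen m g j j).
Proof.
  intros Hj. apply same_length; try apply NoDup_ogen.
  intros o. rewrite !in_ogen by lia. tauto.
Qed.

Lemma length_build m OG k :
  length (build m OG k) = m * list_sum (map (fun i => length (OG i) * length (OG (k - i))) (seq 0 (S k))).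
Proof.
  unfold build. rewrite (flat_map_constant_length (c := list_sum (map (fun i => length (OG i) * length (OG (k - i))) (seq 0 (S k))))).
  - rewrite length_seq. reflexivity.
  - intros a _. rewrite length_flat_map. f_equal. apply map_ext. intros i.
    rewrite (flat_map_constant_length (c := length (OG (k - i)))); [reflexivity|].
    intros l _. apply length_map.
Qed.

Lemma filter_true {A} (l : list A) : filter (fun _ => true) l = l.
Proof. induction l; simpl; congruence. Qed.

Lemma filter_gA_in u L : NoDup L -> In u L -> length (filter (gA u) L) + 1 = length L.
Proof.
  induction 1 as [|x l Hx Hl IH]; simpl; [tauto|]. intros [->|Hu].
  - unfold gA at 1. destruct (excluded_middle_informative (u = u)); [|congruence].
    f_equal. clear IH. induction l as [|y l IH']; simpl; auto.
    unfold gA at 1. destruct (excluded_middle_informative (y = u)) as [->|]; [simpl in Hx; tauto|].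
    simpl. inversion Hl; subst. simpl in Hx. f_equal. apply IH'; auto.
  - unfold gA at 1. destruct (excluded_middle_informative (x = u)) as [->|]; [tauto|].
    simpl. rewrite IH; auto.
Qed.

Lemma filter_gA_notin u L : ~ In u L -> length (filter (gA u) L) = length L.
Proof.
  induction L as [|x l IH]; simpl; auto. intros H.
  unfold gA at 1. destruct (excluded_middle_informative (x = u)) as [->|]; [tauto|].
  simpl. rewrite IH; auto.
Qed.

Definition NB m k := length (ogen m gT k k).
Definition NA m u k := length (ogen m (gA u) k k).

Lemma ogen_sound m g f j o : In o (ogen m g f j) -> onodes o = j.
Proof.
  unfold ogen. destruct j as [|j]; simpl; [intros [<-|[]]; reflexivity|]. rewrite in_map_iff.
  intros [t' [<- Ht']]. simpl. eapply gen_sound; eauto.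
Qed.

Lemma NB_0 m : NB m 0 = 1.
Proof. reflexivity. Qed.
Lemma NA_0 m u : NA m u 0 = 1.
Proof. reflexivity. Qed.

Lemma length_ogen_S m g k : length (ogen m g (S k) (S k)) = length (filter g (build m (ogen m g k) k)).
Proof. unfold ogen at 1. simpl ogen_of. rewrite length_map. reflexivity. Qed.

Lemma build_fuel m g k :
  list_sum (map (fun i => length (ogen m g k i) * length (ogen m g k (k - i))) (seq 0 (S k))) =
  list_sum (map (fun i => length (ogen m g i i) * length (ogen m g (k-i) (k - i))) (seq 0 (S k))).
Proof.
  f_equal. apply map_ext_in. intros i Hi. apply in_seq in Hi.
  rewrite (ogen_fuel m g k i), (ogen_fuel m g k (k-i)) by lia. reflexivity.
Qed.

Lemma NB_S m k : NB m (S k) = m * list_sum (map (fun i => NB m i * NB m (k-i)) (seq 0 (S k))).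
Proof.
  unfold NB. rewrite length_ogen_S. unfold gT. rewrite filter_true, length_build.
  rewrite build_fuel. reflexivity.
Qed.

Lemma in_u_build m u k : labeled m u ->
  (In u (build m (ogen m (gA u) k) k) <-> k = edges u).
Proof.
  intros Hu. rewrite (in_build m _ (fun t => labeled m t /\ ok (gA u) t) k).
  2:{ intros j o Hj. apply in_ogen. lia. }
  unfold edges. destruct u as [a l r] eqn:Eu. rewrite nnodes_eq.
  rewrite labeled_eq in Hu. split.
  - intros [a' [l' [r' [E [_ [Hn _]]]]]]. injection E as <- <- <-. lia.
  - intros Hk. exists a, l, r. repeat split; try tauto; try lia.
    + destruct l as [l|]; simpl in *; [|tauto]. split; [tauto|]. apply ok_gA.
      intros Hc. apply contains_le in Hc. rewrite nnodes_eq in Hc. simpl in Hc. lia.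
    + destruct r as [r|]; simpl in *; [|tauto]. split; [tauto|]. apply ok_gA.
      intros Hc. apply contains_le in Hc. rewrite nnodes_eq in Hc. simpl in Hc. lia.
Qed.

Lemma NA_S m u k : labeled m u ->
  NA m u (S k) + (if Nat.eqb k (edges u) then 1 else 0) =
  m * list_sum (map (fun i => NA m u i * NA m u (k-i)) (seq 0 (S k))).
Proof.
  intros Hu. unfold NA. rewrite length_ogen_S.
  assert (HN : NoDup (build m (ogen m (gA u) k) k)).
  { apply NoDup_build; [intros; apply NoDup_ogen| intros j o _ Ho; eapply ogen_sound; eauto]. }
  destruct (Nat.eqb_spec k (edges u)) as [E|E].
  - rewrite filter_gA_in; auto. 2: apply in_u_build; auto.
    rewrite length_build, build_fuel. reflexivity.
  - rewrite filter_gA_notin. 2: rewrite in_u_build; auto.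
    rewrite length_build, build_fuel, Nat.add_0_r. reflexivity.
Qed.

Lemma NA_le_NB m u k : NA m u k <= NB m k.
Proof.
  unfold NA, NB. apply NoDup_incl_length; [apply NoDup_ogen|].
  intros o. rewrite !in_ogen by lia. intros [H1 H2]. split; auto.
  destruct o; simpl in *; auto. split; [tauto| apply ok_gT].
Qed.

Lemma count_c m u n k :
  is_count (fun t => labeled m t /\ edges t = n /\ contains t u) k ->
  k + NA m u (S n) = NB m (S n).
Proof.
  intros [s [Hs [Hin Hl]]]. subst k. unfold NA, NB, ogen. cbn [ogen_of]. rewrite !length_map.
  set (La := gen m (gA u) (S n) (S n)). set (Lb := gen m gT (S n) (S n)).
  assert (HLa : forall t, In t La <-> labeled m t /\ nnodes t = S n /\ ~ contains t u).
  { intros t. unfold La. rewrite in_gen by lia. rewrite ok_gA. tauto. }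
  assert (HLb : forall t, In t Lb <-> labeled m t /\ nnodes t = S n).
  { intros t. unfold Lb. rewrite in_gen by lia. pose proof (ok_gT t). tauto. }
  assert (He : forall t, edges t = n <-> nnodes t = S n).
  { intros t. unfold edges. pose proof (nnodes_pos t). lia. }
  rewrite Nat.add_comm, <- length_app. apply same_length.
  - apply NoDup_app; [apply NoDup_gen| exact Hs|].
    intros t H1 H2. apply HLa in H1. apply Hin in H2. tauto.
  - apply NoDup_gen.
  - intros t. rewrite in_app_iff, HLa, HLb, Hin, He. destruct (classic (contains t u)); tauto.
Qed.

Open Scope R_scope.

Lemma conv_le (a : nat -> R) N : (forall n, 0 <= a n) ->
  sum_f_R0 (fun k => sum_f_R0 (fun i => a i * a (k-i)%nat) k) N <= (sum_f_R0 a N)^2.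
Proof.
  intros Ha. destruct N as [|N].
  - simpl. specialize (Ha 0%nat). nra.
  - replace ((sum_f_R0 a (S N))^2) with (sum_f_R0 a (S N) * sum_f_R0 a (S N)) by ring.
    rewrite cauchy_finite by lia.
    assert (0 <= sum_f_R0
         (fun k : nat =>
          sum_f_R0 (fun l : nat => a (S (l + k)) * a (S N - l)%nat)
            (Init.Nat.pred (S N - k)))
         (Init.Nat.pred (S N))).
    { apply cond_pos_sum; intros; apply cond_pos_sum; intros.
      apply Rmult_le_pos; apply Ha. }
    lra.
Qed.

Definition rfun (m w : R) := (1 - sqrt (1 - 4*m*w)) / (2*m*w).

Lemma rfun_eq m w : 0 < m -> 0 < w -> 4*m*w <= 1 ->
  rfun m w = 1 + m*w*(rfun m w)^2 /\ 2*m*w*rfun m w = 1 - sqrt (1-4*m*w)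
  /\ 0 <= sqrt (1 - 4*m*w) <= 1.
Proof.
  intros Hm Hw H1.
  assert (Hs := pow2_sqrt (1-4*m*w) ltac:(lra)).
  assert (Hs0 := sqrt_pos (1-4*m*w)).
  set (s := sqrt (1-4*m*w)) in *.
  assert (Hmw: 0 < m*w) by nra.
  assert (E: 2*m*w*rfun m w = 1 - s).
  { unfold rfun. fold s. field. lra. }
  split; [|split; [exact E| nra]].
  apply Rmult_eq_reg_l with (4*m*w); [|lra].
  set (r := rfun m w) in *.
  replace (4*m*w*(1 + m*w*r^2)) with (4*m*w + (2*m*w*r)^2) by ring.
  rewrite E. replace (4*m*w*r) with (2*(2*m*w*r)) by ring. rewrite E. nra.
Qed.

Definition conv (a : nat -> R) k := sum_f_R0 (fun i => a i * a (k-i)%nat) k.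

Lemma conv_pow (y : nat -> R) (z : R) k :
  conv y k * z^k = conv (fun i => y i * z^i) k.
Proof.
  unfold conv. rewrite Rmult_comm, scal_sum. apply sum_eq. intros i Hi.
  assert (E: z^k = z^i * z^(k-i)) by (rewrite <- pow_add; f_equal; lia).
  rewrite E. ring.
Qed.

Lemma shift_sum (y : nat -> R) (m z : R) N :
  y 0%nat = 1 ->
  (forall k, y (S k) = m * conv y k) ->
  sum_f_R0 (fun k => y k * z^k) (S N) = 1 + m*z*sum_f_R0 (conv (fun i => y i * z^i)) N.
Proof.
  intros H0 HS. rewrite decomp_sum by lia. simpl pred. rewrite H0.
  rewrite (scal_sum _ N (m*z)). simpl pow at 1. rewrite Rmult_1_r.
  f_equal. apply sum_eq. intros i _.
  rewrite HS, <- conv_pow. simpl. ring.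
Qed.

Lemma partial_bound (y : nat -> R) (m w : R) :
  0 < m -> 0 < w -> 4*m*w <= 1 ->
  y 0%nat = 1 -> (forall k, y (S k) = m * conv y k) -> (forall k, 0 <= y k) ->
  forall N, sum_f_R0 (fun k => y k * w^k) N <= rfun m w.
Proof.
  intros Hm Hw H1 H0 HS Hp.
  destruct (rfun_eq m w Hm Hw H1) as [Er [E2 Es]].
  set (r := rfun m w) in *.
  assert (Hr1 : 1 <= r) by (rewrite Er; assert (0 <= m*w*r^2) by (apply Rmult_le_pos; nra); lra).
  induction N as [|N IH].
  - simpl. rewrite H0. lra.
  - rewrite shift_sum with (m := m) by assumption.
    assert (Hc := conv_le (fun i => y i * w^i) N).
    assert (Hpos : forall n, 0 <= y n * w^n) by (intros; apply Rmult_le_pos; [apply Hp| apply pow_le; lra]).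
    specialize (Hc Hpos).
    assert (0 <= sum_f_R0 (fun i => y i * w^i) N) by (apply cond_pos_sum; exact Hpos).
    unfold conv at 1.
    assert (sum_f_R0 (fun i => y i * w^i) N ^2 <= r^2) by (apply pow_incr; lra).
    assert (0 < m*w) by nra.
    assert (m*w*sum_f_R0 (fun k : nat => sum_f_R0 (fun i : nat => y i * w ^ i * (y (k - i)%nat * w ^ (k - i))) k) N <= m*w*r^2).
    { apply Rmult_le_compat_l; lra. }
    lra.
Qed.

Lemma is_series_lin (a b : nat -> R) la lb c d: is_series a la -> is_series b lb ->
  is_series (fun n => c * a n - d * b n) (c*la - d*lb).
Proof.
  intros Ha Hb.
  apply (is_series_minus _ _ _ _ (is_series_scal_l c _ _ Ha) (is_series_scal_l d _ _ Hb)).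
Qed.

Lemma is_series_of_lim (a : nat -> R) (l : R) : is_lim_seq (sum_f_R0 a) l -> is_series a l.
Proof. intros H. apply is_series_Reals. apply (proj1 (is_lim_seq_Reals _ _) H). Qed.

Lemma lim_of_is_series (a : nat -> R) (l : R) : is_series a l -> is_lim_seq (sum_f_R0 a) l.
Proof. intros H. apply is_series_Reals in H. apply (proj2 (is_lim_seq_Reals _ _) H). Qed.

Lemma delta_series (p : nat) (c : R) :
  is_series (fun k => if Nat.eqb k p then c else 0) c.
Proof.
  apply is_series_of_lim.
  apply is_lim_seq_ext_loc with (u := fun _ => c); [|apply is_lim_seq_const].
  exists p. intros n Hn. induction n as [|n IH].
  - simpl. assert (p = 0%nat) by lia. subst. reflexivity.
  - destruct (Nat.eq_dec p (S n)) as [->|Hne].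
    + simpl. rewrite Nat.eqb_refl.
      assert (sum_f_R0 (fun k => if Nat.eqb k (S n) then c else 0) n = 0).
      { clear. assert (forall N, (N <= n)%nat -> sum_f_R0 (fun k => if Nat.eqb k (S n) then c else 0) N = 0).
        { induction N; intros HN; simpl.
          - destruct (Nat.eqb_spec 0 (S n)); [lia|reflexivity].
          - rewrite IHN by lia. destruct (Nat.eqb_spec N n); [lia|ring]. }
        apply H; lia. }
      lra.
    + assert (E := IH ltac:(lia)). cbn [sum_f_R0]. rewrite <- E. destruct (Nat.eqb_spec (S n) p); [lia|ring].
Qed.

Lemma ex_series_y (y : nat -> R) (m w : R) :
  0 < m -> 0 < w -> 4*m*w <= 1 ->
  y 0%nat = 1 -> (forall k, y (S k) = m * conv y k) -> (forall k, 0 <= y k) ->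
  ex_series (fun k => y k * w^k) /\ Series (fun k => y k * w^k) <= rfun m w.
Proof.
  intros Hm Hw H1 H0 HS Hp.
  assert (Hb := partial_bound y m w Hm Hw H1 H0 HS Hp).
  assert (Hpos : forall n, 0 <= y n * w^n) by (intros; apply Rmult_le_pos; [apply Hp| apply pow_le; lra]).
  assert (Hex : ex_finite_lim_seq (sum_f_R0 (fun k => y k * w^k))).
  { apply ex_finite_lim_seq_incr with (M := rfun m w); [|exact Hb].
    intros n. cbn [sum_f_R0]. specialize (Hpos (S n)). lra. }
  destruct Hex as [l Hl].
  assert (Hs : is_series (fun k => y k * w^k) l) by (apply is_series_of_lim; exact Hl).
  split; [exists l; exact Hs|].
  rewrite (is_series_unique _ _ Hs).
  assert (H := is_lim_seq_le _ _ _ _ Hb Hl (is_lim_seq_const (rfun m w))).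
  exact H.
Qed.


Lemma gen_series (x y : nat -> R) (m eps : R) (p : nat) (z : R) :
  0 < m -> z <> 0 -> Rabs z < / (4*m) ->
  y 0%nat = 1 -> (forall k, y (S k) = m * conv y k) -> (forall k, 0 <= y k) ->
  x 0%nat = 1 -> (forall k, x (S k) = m * conv x k - (if Nat.eqb k p then eps else 0)) ->
  (forall k, Rabs (x k) <= y k) ->
  is_series (fun k => x (S k) * z^(S k))
    ((1 - sqrt (1 - 4*m*z + 4*eps*m*z^(p+2)))/(2*m*z) - 1).
Proof.
  intros Hm Hz Hzl Hy0 HyS Hyp Hx0 HxS Hxy.
  set (w := Rabs z).
  assert (Hw : 0 < w) by (apply Rabs_pos_lt; exact Hz).
  assert (H1 : 4*m*w <= 1).
  { assert (4*m*w < 4*m*/(4*m)) by (apply Rmult_lt_compat_l; [lra|exact Hzl]).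
    rewrite Rinv_r in H by lra. lra. }
  destruct (ex_series_y y m w Hm Hw H1 Hy0 HyS Hyp) as [Hey Hsy].
  destruct (rfun_eq m w Hm Hw H1) as [Er [E2 Es]].
  set (a := fun k => x k * z^k).
  assert (Hab : forall k, 0 <= Rabs (a k) <= y k * w^k).
  { intros k. split; [apply Rabs_pos|]. unfold a, w. rewrite Rabs_mult, <- RPow_abs.
    apply Rmult_le_compat_r; [apply pow_le; apply Rabs_pos| apply Hxy]. }
  assert (Hea : ex_series (fun k => Rabs (a k))).
  { apply (@ex_series_le R_AbsRing R_CompleteNormedModule (fun k => Rabs (a k)) (fun k => y k * w^k)); [|exact Hey].
    intros n. unfold norm; simpl. rewrite Rabs_Rabsolu. apply Hab. }
  assert (Hea' : ex_series a) by (apply ex_series_Rabs; exact Hea).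
  set (X := Series a).
  assert (HX : is_series a X) by (apply Series_correct; exact Hea').
  assert (HXb : Rabs X <= rfun m w).
  { apply Rle_trans with (Series (fun k => Rabs (a k))); [apply Series_Rabs; exact Hea|].
    apply Rle_trans with (Series (fun k => y k * w^k)); [|exact Hsy].
    apply Series_le; [exact Hab| exact Hey]. }
  assert (Hmul := is_series_mult a a X X HX HX Hea Hea).
  assert (HX1 : is_series (fun k => a (S k)) (X - 1)).
  { apply is_series_incr_1. replace (plus _ _) with X; [exact HX|].
    unfold a. rewrite Hx0. simpl. unfold plus; simpl. ring. }
  assert (Hd := delta_series p (eps * z^p)).
  assert (Hlin := is_series_lin _ _ _ _ (z*m) z Hmul Hd).
  assert (HX2 : is_series (fun k => a (S k)) (z*m*(X*X) - z*(eps*z^p))).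
  { eapply is_series_ext; [|exact Hlin]. intros k. simpl.
    unfold a. rewrite HxS. simpl pow.
    replace (sum_f_R0 (fun k0 : nat => x k0 * z ^ k0 * (x (k - k0)%nat * z ^ (k - k0))) k)
      with (conv x k * z^k) by (rewrite conv_pow; reflexivity).
    destruct (Nat.eqb_spec k p); [subst; ring| ring]. }
  assert (Eq : X - 1 = z*m*(X*X) - z*(eps*z^p)).
  { rewrite <- (is_series_unique _ _ HX1). apply is_series_unique. exact HX2. }
  set (D := 1 - 4*m*z + 4*eps*m*z^(p+2)).
  assert (ED : D = (1 - 2*m*z*X)^2).
  { unfold D. rewrite pow_add. apply Rminus_diag_uniq.
    transitivity (4*m*z*((X - 1) - (z*m*(X*X) - z*(eps*z^p)))); [ring| rewrite Eq; ring]. }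
  assert (Hpos : 0 <= 1 - 2*m*z*X).
  { assert (Rabs (2*m*z*X) <= 1).
    { rewrite !Rabs_mult. rewrite (Rabs_right 2) by lra. rewrite (Rabs_right m) by lra.
      fold w. apply Rle_trans with (2*m*w*rfun m w); [|lra].
      apply Rmult_le_compat_l; [nra| exact HXb]. }
    apply Rabs_le_between in H. lra. }
  rewrite ED, sqrt_pow2 by exact Hpos.
  replace ((1 - (1 - 2 * m * z * X)) / (2 * m * z) - 1) with (X - 1) by (field; lra).
  exact HX1.
Qed.


Lemma INR_list_sum_seq (h : nat -> nat) k :
  INR (list_sum (map h (seq 0 (S k)))) = sum_f_R0 (fun i => INR (h i)) k.
Proof.
  induction k as [|k IH].
  - simpl. rewrite Nat.add_0_r. reflexivity.
  - rewrite seq_S, map_app, list_sum_app, plus_INR, IH. simpl. rewrite Nat.add_0_r. reflexivity.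
Qed.

Theorem lemma8 (m : nat) (u : btree) (c : nat -> nat) :
  (1 <= m)%nat ->
  labeled m u ->
  (forall n : nat,
      is_count (fun t => labeled m t /\ edges t = n /\ contains t u) (c n)) ->
  forall z : R, z <> 0 -> Rabs z < / (4 * INR m) ->
  is_series (fun n => INR (c n) * z ^ n)
    ((sqrt (1 - 4 * INR m * z + 4 * INR m * z ^ (edges u + 2))
      - sqrt (1 - 4 * INR m * z)) / (2 * INR m * z ^ 2)).
Proof.
  intros Hm Hu Hc z Hz Hzl.
  set (y := fun k => INR (NB m k)).
  set (x := fun k => INR (NA m u k)).
  assert (HmR : 0 < INR m) by (apply lt_0_INR; lia).
  assert (Hy0 : y 0%nat = 1) by reflexivity.
  assert (Hx0 : x 0%nat = 1) by reflexivity.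
  assert (HyS : forall k, y (S k) = INR m * conv y k).
  { intros k. unfold y. rewrite NB_S, mult_INR, INR_list_sum_seq. unfold conv. f_equal.
    apply sum_eq. intros i _. apply mult_INR. }
  assert (HxS : forall k, x (S k) = INR m * conv x k - (if Nat.eqb k (edges u) then 1 else 0)).
  { intros k. unfold x. pose proof (f_equal INR (NA_S m u k Hu)) as E.
    rewrite plus_INR, mult_INR, INR_list_sum_seq in E.
    unfold conv. replace (sum_f_R0 (fun i : nat => INR (NA m u i) * INR (NA m u (k - i))) k)
      with (sum_f_R0 (fun i : nat => INR (NA m u i * NA m u (k - i))) k)
      by (apply sum_eq; intros; apply mult_INR).
    destruct (Nat.eqb k (edges u)); simpl in E; lra. }
  assert (Hyp : forall k, 0 <= y k) by (intros; apply pos_INR).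
  assert (Hxy : forall k, Rabs (x k) <= y k).
  { intros k. unfold x, y. rewrite Rabs_right by (apply Rle_ge, pos_INR). apply le_INR, NA_le_NB. }
  assert (Hyy : forall k, Rabs (y k) <= y k).
  { intros k. rewrite Rabs_right by (apply Rle_ge, Hyp). lra. }
  assert (HY := gen_series y y (INR m) 0 (edges u) z HmR Hz Hzl Hy0 HyS Hyp Hy0
     ltac:(intros k; rewrite HyS; destruct (Nat.eqb k (edges u)); ring) Hyy).
  assert (HX := gen_series x y (INR m) 1 (edges u) z HmR Hz Hzl Hy0 HyS Hyp Hx0 HxS Hxy).
  assert (HL := is_series_lin _ _ _ _ (/z) (/z) HY HX).
  assert (Hcn : forall n, INR (c n) = y (S n) - x (S n)).
  { intros n. pose proof (f_equal INR (count_c m u n (c n) (Hc n))) as E.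
    rewrite plus_INR in E. unfold x, y. lra. }
  assert (Hext : forall n, (fun n => / z * (fun k : nat => y (S k) * z ^ S k) n -
     / z * (fun k : nat => x (S k) * z ^ S k) n) n = INR (c n) * z^n).
  { intros n. cbv beta. rewrite Hcn. simpl pow. field. exact Hz. }
  apply (is_series_ext _ _ _ Hext) in HL.
  replace (1 - 4 * INR m * z + 4 * 0 * INR m * z ^ (edges u + 2)) with (1 - 4 * INR m * z) in HL by ring.
  replace (1 - 4 * INR m * z + 4 * 1 * INR m * z ^ (edges u + 2))
    with (1 - 4 * INR m * z + 4 * INR m * z ^ (edges u + 2)) in HL by ring.
  match goal with |- is_series _ ?L => replace L with (/z * ((1 - sqrt (1 - 4 * INR m * z)) / (2 * INR m * z) - 1) -
      /z * ((1 - sqrt (1 - 4 * INR m * z + 4 * INR m * z ^ (edges u + 2))) / (2 * INR m * z) - 1)) end.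
  - exact HL.
  - field. lra.
Qed.
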